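(* Let $p$ be a prime, $m$ a positive integer, let $e,k$ be integers with $e\geq2$ and $1\leq k\leq e-1$, and let $b\ge2$ be an integer. If $0\leq i\leq p^{e-k-1}$ is such that $b+i\leq p^{e-k}$ and $i\leq b$, then $$d_b\big(\mathcal{C}_{p^e-p^{e-k}+i}\big)=p^k(b+i).$$
   Context: For $0\le t\le p^e$, $\mathcal{C}_t$ denotes the cyclic code $\langle (x-1)^t\rangle\subseteq \mathbb{F}_{p^m}[x]/\langle x^{p^e}-1\rangle$, with polynomials identified with their coefficient vectors in $\mathbb{F}_{p^m}^{p^e}$. For $c\in\mathbb{F}_{p^m}^{n}$, $\pi_b(c)$ is the list of the $n$ cyclically consecutive $b$-tuples $(c_j,\dots,c_{j+b-1})$ (indices mod $n$), $d_b(c,c')=d_H(\pi_b(c),\pi_b(c'))$, and $d_b(\mathcal{C})$ is the minimum of $d_b(c,c')$ over distinct $c,c'\in\mathcal{C}$. *)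

(* Defs.v *)
From HB Require Import structures.
From mathcomp Require Import all_boot all_order all_algebra.
Set Implicit Arguments. Unset Strict Implicit. Unset Printing Implicit Defensive.
Import GRing.Theory.
Local Open Scope ring_scope.

(* The index (k mod n) as an element of 'I_n (n > 0 is witnessed by i). *)
Definition cidx (n : nat) (i : 'I_n) (k : nat) : 'I_n :=
  Ordinal (ltn_pmod k (leq_ltn_trans (leq0n i) (ltn_ord i))).

(* Cyclic code C_t = <(x-1)^t> in F[x]/<x^n - 1>, as a predicate on
   coefficient vectors: c is the coefficient vector of ((x-1)^t * g) mod (x^n-1)
   for some polynomial g. *)
Definition in_Ct (F : fieldType) (n t : nat) (c : {ffun 'I_n -> F}) : Prop :=
  exists g : {poly F},
    forall i : 'I_n, c i = ((('X - 1) ^+ t * g) %% ('X ^+ n - 1))`_i.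

Definition bsym (F : fieldType) (n b : nat) (c : {ffun 'I_n -> F}) (j : 'I_n)
  : {ffun 'I_b -> F} :=
  [ffun l : 'I_b => c (cidx j (j + l)%N)].

Definition bdist (F : finFieldType) (n b : nat) (c c' : {ffun 'I_n -> F}) : nat :=
  #|[set j : 'I_n | bsym b c j != bsym b c' j]|.

Definition min_bdist_is (F : finFieldType) (n b : nat)
  (C : {ffun 'I_n -> F} -> Prop) (d : nat) : Prop :=
  (exists c c', [/\ C c, C c', c != c' & bdist b c c' = d]) /\
  (forall c c', C c -> C c' -> c != c' -> (d <= bdist b c c')%N).

(* Main.v *)
Require Import Defs.
From HB Require Import structures.
From mathcomp Require Import all_boot all_order all_algebra all_field zify.
Set Implicit Arguments. Unset Strict Implicit. Unset Printing Implicit Defensive.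
Import GRing.Theory.


Definition cnt (f : nat -> bool) lo hi := (\sum_(lo <= j < hi) f j)%N.

Lemma cnt_split f lo m hi : lo <= m -> m <= hi -> cnt f lo hi = cnt f lo m + cnt f m hi.
Proof. by move=> h1 h2; rewrite /cnt (big_cat_nat h1 h2). Qed.

Lemma cnt_sub f lo lo' hi' hi : lo <= lo' -> lo' <= hi' -> hi' <= hi ->
  cnt f lo' hi' <= cnt f lo hi.
Proof.
move=> h1 h2 h3; rewrite (cnt_split f h1 (leq_trans h2 h3)) (cnt_split f h2 h3).
by rewrite addnC -addnA leq_addr.
Qed.

Lemma cnt_all (f : nat -> bool) lo hi : (forall j, lo <= j < hi -> f j) -> cnt f lo hi = hi - lo.
Proof.
move=> h; rewrite /cnt -[hi - lo]muln1 -sum_nat_const_nat.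
rewrite big_nat_cond [RHS]big_nat_cond; apply: eq_bigr => j /andP[hj _].
by rewrite h.
Qed.

Lemma cnt_rot f P z : (forall x, f (x + P) = f x) -> cnt f z (z + P) = cnt f 0 P.
Proof.
move=> hf; elim: z => [//|z IH].
have e1 : cnt f z (z + P).+1 = f z + cnt f z.+1 (z.+1 + P).
  by rewrite /cnt big_ltn ?addSn // ltnS leq_addr.
have e2 : cnt f z (z + P).+1 = cnt f z (z + P) + f (z + P).
  by rewrite /cnt big_nat_recr //= leq_addr.
by rewrite -IH; move: e1 e2; rewrite hf; lia.
Qed.

Lemma cnt_blocks f z N B q : (forall r, B <= cnt f (z + r * N) (z + r * N + N)) ->
  q * B <= cnt f z (z + q * N).
Proof.
move=> h; elim: q => [|q IH]; first by rewrite mul0n.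
rewrite (cnt_split f (m := z + q * N)); last 2 first.
- exact: leq_addr.
- by rewrite mulSn leq_add2l addnC leq_addr.
rewrite mulSn addnC leq_add // mulSn [N + _]addnC addnA; exact: h.
Qed.

Section Comb.
Variable nz : nat -> bool.
Variables N i b : nat.
Hypothesis hper : forall x, nz (x + N) = nz x.
Hypothesis hgap : forall a g, (forall l, l < g -> ~~ nz (a + l)) -> g + i < N.
Hypothesis hb : 0 < b.
Hypothesis hib : i <= b.
Hypothesis hbiN : b + i <= N.

Definition W j := has (fun l => nz (j + l)) (iota 0 b).

Lemma WP j : reflect (exists2 l, l < b & nz (j + l)) (W j).
Proof.
apply: (iffP hasP) => [[l]|[l hl hn]]; first by rewrite mem_iota => /andP[_ hl] hn; exists l.
by exists l => //; rewrite mem_iota.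
Qed.

Lemma hperW x : W (x + N) = W x.
Proof. by apply: eq_has => l /=; rewrite addnAC hper. Qed.

Lemma hper_mul x r : nz (x + r * N) = nz x.
Proof. by elim: r => [|r IH]; rewrite ?muln0 ?addn0 // mulSn addnCA addnC hper. Qed.

Lemma hperW_mul x r : W (x + r * N) = W x.
Proof. by apply: eq_has => l /=; rewrite addnAC hper_mul. Qed.

Lemma block z : ~~ W z -> b + i <= cnt W z (z + N).
Proof.
move=> hz.
have hz' : forall l, l < b -> ~~ nz (z + l).
  by move=> l hl; apply: contra hz => hn; apply/WP; exists l.
pose P d := nz (z + d) && (d < N).
have exP : exists d, P d.
  case: (boolP (has P (iota 0 N))) => [/hasP[d _ hd]|hno]; first by exists d.
  have : N + i < N.
    apply: (hgap (a := z)) => l hl; apply/negP => hn.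
    by move/hasPn: hno => /(_ l); rewrite /P mem_iota add0n hl hn /=; move/(_ isT).
  by rewrite ltnNge leq_addr.
have ubP : forall d, P d -> d <= N by move=> d /andP[_ /ltnW].
case: (ex_minnP exP) => s /andP[hs hsN] hsmin.
case: (ex_maxnP exP ubP) => u /andP[hu huN] humax.
have hbs : b <= s.
  by rewrite leqNgt; apply/negP => hsb; move: (hz' s hsb); rewrite hs.
have hsu : s <= u by apply: humax; rewrite /P hs hsN.
have hsiu : s + i <= u.
  suff H : forall l, l < s + N - 1 - u -> ~~ nz (z + u + 1 + l).
    by have := hgap H; lia.
  move=> l hl; apply/negP => hn.
  case: (ltnP (u + 1 + l) N) => hlt.
    have : P (u + 1 + l) by rewrite /P !addnA hn hlt.
    by move/humax; lia.
  have e : z + u + 1 + l = (z + (u + 1 + l - N)) + N by lia.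
  rewrite e hper in hn.
  have : P (u + 1 + l - N) by rewrite /P hn /=; lia.
  by move/hsmin; lia.
have hWs : forall j, z + s + 1 - b <= j < z + s + 1 -> W j.
  move=> j /andP[h1 h2]; apply/WP; exists (z + s - j); first lia.
  by have -> : j + (z + s - j) = z + s by lia.
have hWu : forall j, z + u + 1 - b <= j < z + u + 1 -> W j.
  move=> j /andP[h1 h2]; apply/WP; exists (z + u - j); first lia.
  by have -> : j + (z + u - j) = z + u by lia.
case: (ltnP (u - s) b) => hus.
  have hall : forall j, z + s + 1 - b <= j < z + u + 1 -> W j.
    move=> j /andP[h1 h2]; case: (leqP j (z + s)) => hj.
      by apply: hWs; lia.
    by apply: hWu; lia.
  have := cnt_sub W (lo := z) (hi := z + N) (lo' := z + s + 1 - b) (hi' := z + u + 1).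
  rewrite (cnt_all hall); lia.
have h1 := cnt_all hWs; have h2 := cnt_all hWu.
have := cnt_sub W (lo := z) (hi := z + N) (lo' := z + s + 1 - b) (hi' := z + u + 1).
rewrite (cnt_split W (m := z + s + 1)); try lia.
rewrite (cnt_split W (lo := z + s + 1) (m := z + u + 1 - b)); try lia.
Qed.

Lemma total q : q * (b + i) <= cnt W 0 (q * N).
Proof.
case: (boolP (has (fun z => ~~ W z) (iota 0 N))) => [/hasP[z _ hz] | hall].
  rewrite -(cnt_rot (P := q * N) z); last by move=> x; rewrite hperW_mul.
  apply: cnt_blocks => r; apply: block; rewrite hperW_mul; exact: hz.
have hN0 : 0 < N by lia.
rewrite cnt_all ?subn0 ?leq_mul2l ?hbiN ?orbT // => j _.
rewrite (divn_eq j N) addnC hperW_mul.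
move/hasPn: hall => /(_ (j %% N)); rewrite mem_iota add0n ltn_mod hN0 /=.
by move/(_ isT); rewrite negbK.
Qed.
End Comb.

Lemma cnt_le (f g : nat -> bool) lo hi : (forall j, f j -> g j) -> cnt f lo hi <= cnt g lo hi.
Proof.
move=> h; apply: leq_sum => j _; case: (boolP (f j)) => // /h ->. by [].
Qed.

Lemma cnt_mul (f : nat -> bool) N q : (forall x, f (x + N) = f x) -> cnt f 0 (q * N) = q * cnt f 0 N.
Proof.
move=> hf; elim: q => [|q IH]; first by rewrite !mul0n /cnt big_geq.
rewrite [q.+1 * N]mulSn [N + _]addnC (cnt_split f (m := q * N)) ?leq0n ?leq_addr //.
by rewrite IH cnt_rot // mulSn addnC.
Qed.

Lemma upper (nz : nat -> bool) N i b q : (forall x, nz x -> x %% N <= i) -> 0 < b -> b + i <= N ->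
  cnt (W nz b) 0 (q * N) <= q * (b + i).
Proof.
move=> hnz hb hbi.
have hN : 0 < N by lia.
pose g j := (j + b.-1) %% N < b + i.
have hWg : forall j, W nz b j -> g j.
  move=> j /(WP nz b j) [l hl hn]; have h := hnz _ hn.
  rewrite /g (_ : j + b.-1 = (j + l) + (b.-1 - l)); last by lia.
  rewrite -modnDml; move: ((j + l) %% N) h => r h; rewrite modn_small; lia.
apply: leq_trans (cnt_le _ _ hWg) _.
have hg : forall x, g (x + N) = g x by move=> x; rewrite /g addnAC modnDr.
rewrite cnt_mul // leq_mul2l; apply/orP; right.
have -> : cnt g 0 N = cnt (fun x => x %% N < b + i) b.-1 (b.-1 + N).
  rewrite /cnt -{1}(add0n b.-1) -{1}(addnK b.-1 N) [N + _]addnC.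
  by rewrite -(big_addn 0 (b.-1 + N) b.-1 xpredT (fun x => nat_of_bool (x %% N < b + i))).
rewrite cnt_rot; last by move=> x; rewrite modnDr.
rewrite (cnt_split _ (m := b + i)) ?leq0n // (cnt_all (lo := 0)) ?subn0; last first.
  by move=> j /andP[_ hj]; rewrite modn_small //; lia.
rewrite /cnt big_nat_cond big1 ?addn0 // => j /andP[/andP[h1 h2] _].
by rewrite modn_small // ltnNge h1.
Qed.

Section PolyMod.
Local Open Scope ring_scope.
Variable F : fieldType.
Variable n : nat.
Hypothesis n_gt0 : (0 < n)%N.
Local Notation M := ('X^n - 1 : {poly F}).

Lemma size_M : size M = n.+1.
Proof. by rewrite size_XnsubC. Qed.

Lemma Xn_modM : 'X^n %% M = 1.
Proof.
rewrite -{1}(subrK 1 ('X^n : {poly F})).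
by rewrite modpD modpp add0r modp_small // size_M size_poly1 ltnS.
Qed.

Lemma Xl_modM l : 'X^l %% M = 'X^(l %% n)%N.
Proof.
rewrite {1}(divn_eq l n) exprD mulnC exprM [X in X %% _]mulrC -modp_mul.
have -> : ('X^n ^+ (l %/ n)%N : {poly F}) %% M = 1.
  elim: (l %/ n)%N => [|k IH]; first by rewrite expr0 modp_small // size_poly1 size_M.
  by rewrite exprS -modp_mul IH mulr1 Xn_modM.
rewrite mulr1 modp_small // size_polyXn size_M ltnS ltn_mod //.
Qed.

Lemma coef_modM (P : {poly F}) L j : (size P <= L)%N -> (j < n)%N ->
  (P %% M)`_j = \sum_(0 <= l < L | (l %% n)%N == j) P`_l.
Proof.
move=> hP hj.
have eP : P = \poly_(i < L) P`_i.
  apply/polyP => k; rewrite coef_poly; case: ltnP => // h.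
  by rewrite nth_default // (leq_trans hP h).
rewrite {1}eP poly_def.
rewrite (big_morph (fun q => q %% M) (modpD M) (mod0p M)) coef_sum.
under eq_bigr do rewrite modpZl Xl_modM coefZ coefXn.
rewrite -(big_mkord xpredT (fun i => P`_i * (j == (i %% n)%N)%:R)).
rewrite [RHS]big_mkcond /=; apply: eq_bigr => l _.
by rewrite eq_sym; case: eqP => _; rewrite ?mulr1 ?mulr0.
Qed.

Lemma modeq_shift l s y : (l < n)%N -> (y < n)%N -> (s <= n)%N ->
  ((l + s) %% n == y)%N = (l == (y + n - s) %% n)%N.
Proof.
move=> hl hy hs; apply/eqP/eqP => h.
  rewrite -h -addnBA // modnDml -addnA subnKC // modnDr modn_small //.
rewrite h modnDml subnK ?(leq_trans hs) ?leq_addl // modnDr modn_small //.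
Qed.

Lemma shift_coef (D : {poly F}) s y : (size D <= n)%N -> (s <= n)%N -> (y < n)%N ->
  (('X^s * D) %% M)`_y = D`_((y + n - s) %% n).
Proof.
move=> hD hs hy.
have hsz : (size ('X^s * D)%R <= s + n)%N.
  apply: leq_trans (size_polyMleq _ _) _; rewrite size_polyXn addSn /=.
  by rewrite leq_add2l.
rewrite (coef_modM hsz hy) (@big_cat_nat _ _ _ s 0 (s + n) _ _ (leq0n s) (leq_addr n s)) /=.
rewrite big_nat_cond big1 ?add0r; last first.
  move=> l /andP[/andP[_ hl] _].
  by rewrite coefXnM hl.
rewrite -{1}(add0n s) big_addn addKn.
under eq_bigr do rewrite coefXnM ltnNge leq_addl /= addnK.
have hc : ((y + n - s) %% n < n)%N by rewrite ltn_mod.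
rewrite big_mkord.
rewrite (big_pred1 (Ordinal hc)) // => l /=.
by rewrite modeq_shift.
Qed.
End PolyMod.

Section Char.
Local Open Scope ring_scope.
Variable F : fieldType.
Variable p : nat.
Hypothesis pr_p : prime p.
Hypothesis chF : p \in [pchar F].

Lemma frobX a : (('X - 1) ^+ (p ^ a) : {poly F}) = 'X^(p ^ a) - 1.
Proof.
have chP : p \in [pchar {poly F}] by rewrite pchar_poly.
have hn : ([pchar {poly F}]).-nat (p ^ a)%N.
  by rewrite pnatX (pnatE _ pr_p) chP.
have := exprDn_pchar ('X - 1) 1 hn.
by rewrite subrK expr1n => ->; rewrite addrK.
Qed.
End Char.

Section Code.
Local Open Scope ring_scope.
Variable F : fieldType.
Variables n N t : nat.
Hypothesis n_gt0 : (0 < n)%N.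
Local Notation M := ('X^n - 1 : {poly F}).
Hypothesis hM : M = ('X - 1) ^+ n.
Hypothesis hN : ('X^N - 1 : {poly F}) = ('X - 1) ^+ N.
Hypothesis hNn : (N <= n)%N.
Hypothesis hNt : (n <= N + t)%N.
Hypothesis htn : (t <= n)%N.

Lemma size_M_le (D : {poly F}) : (size (D %% M)%R <= n)%N.
Proof.
have := ltn_modp D M; rewrite size_M // ltnS => ->.
by rewrite -size_poly_eq0 size_M.
Qed.

Lemma period (D : {poly F}) : (size D <= n)%N -> ('X - 1) ^+ t %| D ->
  forall x, D`_((x + N) %% n) = D`_(x %% n).
Proof.
move=> hD hdv x.
have e1 : ('X^N * D) %% M = D.
  have -> : ('X^N * D) = ('X^N - 1) * D + D by rewrite mulrBl mul1r subrK.
  rewrite modpD (modp_small (p := D)) ?size_M ?ltnS //.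
  suff -> : (('X^N - 1) * D) %% M = 0 by rewrite add0r.
  apply/modp_eq0P; rewrite hM hN.
  apply: (dvdp_trans (y := ('X - 1) ^+ N * ('X - 1) ^+ t)).
    by rewrite -exprD dvdp_exp2l.
  by apply: dvdp_mul.
have hy : ((x + N) %% n < n)%N by rewrite ltn_mod.
have := shift_coef n_gt0 hD hNn hy; rewrite e1 => ->.
by rewrite -addnBA // modnDml -addnA subnKC // modnDr.
Qed.

Lemma gap (D : {poly F}) : D != 0 -> (size D <= n)%N -> ('X - 1) ^+ t %| D ->
  forall a g, (forall l, (l < g)%N -> D`_((a + l) %% n) = 0) -> (g + t < n)%N.
Proof.
move=> D0 hD hdv.
suff H : forall a g, (g <= n)%N ->
    (forall l, (l < g)%N -> D`_((a + l) %% n) = 0) -> (g + t < n)%N.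
  move=> a g hg; case: (leqP g n) => hgn; first exact: H hgn hg.
  have := H a n (leqnn n) (fun l hl => hg l (ltn_trans hl hgn)); lia.
move=> a g hgn hz.
pose r := ((a + g) %% n)%N.
have hr : (r < n)%N by rewrite ltn_mod.
pose s := (n - r)%N.
have hs : (s <= n)%N by rewrite leq_subr.
pose Q := ('X^s * D) %% M.
have hQ : forall y, (y < n)%N -> Q`_y = D`_((y + r) %% n).
  move=> y hy; rewrite /Q (shift_coef n_gt0 hD hs hy) -addnBA //.
  by rewrite /s subKn // ltnW.
have hdQ : ('X - 1) ^+ t %| Q.
  rewrite /Q -dvdp_mod; first exact: dvdp_mull.
  by rewrite hM dvdp_exp2l.
have hQM : (size Q <= n)%N by apply: size_M_le.
clearbody Q.
have hQz : (size Q <= n - g)%N.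
  apply/leq_sizeP => j hj; case: (ltnP j n) => hjn.
    rewrite hQ // /r modnDmr.
    have -> : (j + (a + g) = (a + (j + g - n)) + n)%N by lia.
    rewrite modnDr; apply: hz; lia.
  by rewrite nth_default // (leq_trans hQM).
have hQ0 : Q != 0.
  have hy0 : ((size D).-1 < n)%N.
    by move: hD; rewrite -size_poly_eq0 in D0; lia.
  have hy : (((size D).-1 + (n - r)) %% n < n)%N by rewrite ltn_mod.
  have ey : ((((size D).-1 + (n - r)) %% n + r) %% n = (size D).-1)%N.
    rewrite modnDml -addnA subnK; last exact: ltnW.
    by rewrite modnDr modn_small.
  apply/negP => /eqP Q0; move: (hQ _ hy); rewrite ey Q0 coef0 => /esym /eqP.
  by rewrite -/(lead_coef D) lead_coef_eq0 (negbTE D0).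
have := dvdp_leq hQ0 hdQ; rewrite -polyC1 size_exp_XsubC => h.
by move: (leq_trans h hQz); rewrite leq_subRL // addnS.
Qed.
End Code.

Lemma card_cnt n (f : nat -> bool) : #|[set j : 'I_n | f j]| = cnt f 0 n.
Proof.
rewrite -sum1_card /cnt big_mkord big_mkcond /=.
by apply: eq_bigr => j _; rewrite inE; case: (f j).
Qed.

Section Bridge.
Local Open Scope ring_scope.
Variable F : finFieldType.

Lemma bdist_cnt n b (c c' : {ffun 'I_n -> F}) (D : {poly F}) :
  (forall j : 'I_n, c j - c' j = D`_j) ->
  bdist b c c' = cnt (W (fun x => D`_(x %% n)%N != 0) b) 0 n.
Proof.
move=> hD; rewrite /bdist -card_cnt; apply: eq_card => j; rewrite !inE.
have hx : forall x : 'I_n, (c x != c' x) = (D`_x != 0).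
  by move=> x; rewrite -hD subr_eq0.
have -> : (bsym b c j != bsym b c' j) =
    [exists l : 'I_b, c (cidx j (j + l)) != c' (cidx j (j + l))].
  apply/idP/idP; last first.
    case/existsP => l hl; apply: contra hl => /eqP e.
    by move/ffunP: e => /(_ l); rewrite /bsym !ffunE => ->.
  case: (boolP [exists l, _]) => // /existsPn H; apply: contraR => _.
  apply/eqP/ffunP => l; rewrite !ffunE; apply/eqP; rewrite -[_ == _]negbK; exact: H.
apply/existsP/WP.
  by case=> l; rewrite hx /= => hl; exists l.
case=> l hl hn; exists (Ordinal hl); by rewrite hx.
Qed.
End Bridge.

Section Main.
Local Open Scope ring_scope.
Variable F : finFieldType.
Variables n N q b i : nat.
Hypothesis hN0 : (0 < N)%N.
Hypothesis hq0 : (0 < q)%N.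
Hypothesis hnq : n = (q * N)%N.
Local Notation M := ('X^n - 1 : {poly F}).
Hypothesis hM : M = ('X - 1) ^+ n.
Hypothesis hN : ('X^N - 1 : {poly F}) = ('X - 1) ^+ N.
Hypothesis hb : (0 < b)%N.
Hypothesis hbiN : (b + i <= N)%N.
Hypothesis hib : (i <= b)%N.
Local Notation t := (n - N + i)%N.

Lemma hn0 : (0 < n)%N. Proof. by rewrite hnq muln_gt0 hN0 hq0. Qed.
Lemma hNn : (N <= n)%N. Proof. by rewrite hnq leq_pmull. Qed.
Lemma htn : (t < n)%N. Proof. have := hNn; lia. Qed.

Lemma powR : ('X - 1) ^+ (n - N) = \sum_(r < q) ('X^N : {poly F}) ^+ r.
Proof.
apply: (@mulfI _ (('X - 1) ^+ N)).
  by rewrite -hN subr_eq0; apply/eqP => /(congr1 (fun p : {poly F} => size p));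
     rewrite size_polyXn size_poly1; lia.
rewrite -exprD subnKC ?hNn // -hM -hN -subrX1 -exprM -mulnC -hnq //.
Qed.

Lemma coefA y : (('X - 1) ^+ t : {poly F})`_y != 0 -> (y %% N <= i)%N.
Proof.
apply: contraR; rewrite -ltnNge => hy.
rewrite exprD powR mulr_suml coef_sum big1 // => r _.
rewrite -exprM coefXnM; case: ltnP => // hr.
apply: nth_default; rewrite -polyC1 size_exp_XsubC.
have h1 : (r <= y %/ N)%N by rewrite leq_divRL // mulnC.
have h2 : (N * r <= N * (y %/ N))%N by rewrite leq_mul2l h1 orbT.
have h3 := divn_eq y N.
move: h2 h3 hy; rewrite [(y %/ N * N)%N]mulnC.
move: (N * r)%N (N * (y %/ N))%N (y %% N)%N => A B C; lia.
Qed.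

Lemma hNt : (n <= N + t)%N. Proof. have := hNn; lia. Qed.
Lemma htn' : (t <= n)%N. Proof. exact: ltnW htn. Qed.

Lemma lower_nz (D : {poly F}) : D != 0 -> (size D <= n)%N -> ('X - 1) ^+ t %| D ->
  (q * (b + i) <= cnt (W (fun x => (D`_(x %% n)%N != 0)%R) b) 0 n)%N.
Proof.
move=> D0 hsz hdv.
suff : (q * (b + i) <= cnt (W (fun x => (D`_(x %% n)%N != 0)%R) b) 0 (q * N))%N.
  by rewrite -hnq.
apply: total => //.
  by move=> x; rewrite (period hn0 hM hN hNn hNt hsz hdv).
move=> a g hz.
have := gap hn0 hM hNn hNt htn' D0 hsz hdv (a := a) (g := g).
have H : (forall l, (l < g)%N -> D`_((a + l) %% n) = 0).
  by move=> l hl; apply/eqP; move: (hz l hl); rewrite negbK.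
move/(_ H); have := hNn; lia.
Qed.

Lemma lower (c c' : {ffun 'I_n -> F}) : in_Ct (n - N + i) c -> in_Ct (n - N + i) c' -> c != c' ->
  (q * (b + i) <= bdist b c c')%N.
Proof.
case=> g hg; case=> g' hg' hne.
pose D := (('X - 1) ^+ t * (g - g')) %% M.
have hD : forall j : 'I_n, c j - c' j = D`_j.
  by move=> j; rewrite hg hg' /D mulrBr modpD modpN coefD coefN.
rewrite (@bdist_cnt F n b c c' D hD); apply: lower_nz.
- apply: contra hne => /eqP D0; apply/eqP/ffunP => j.
  by apply/eqP; rewrite -subr_eq0 hD D0 coef0.
- exact: size_M_le hn0 _.
- rewrite /D -dvdp_mod ?dvdp_mulIl // hM dvdp_exp2l //; exact: htn'.
Qed.

Lemma main_gen : min_bdist_is b (@in_Ct F n (n - N + i)) (q * (b + i)).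
Proof.
split; last by move=> c c' hc hc' hne; apply: lower.
pose A : {poly F} := ('X - 1) ^+ t.
have hsA : size A = t.+1 by rewrite /A -polyC1 size_exp_XsubC.
have hAM : A %% M = A.
  by rewrite modp_small // size_XnsubC ?hn0 // hsA ltnS; apply: htn.
pose c := [ffun j : 'I_n => A`_j].
pose c' := [ffun j : 'I_n => (0 : F)].
have hc : in_Ct (n - N + i) c by exists 1; move=> j; rewrite mulr1 hAM ffunE.
have hc' : in_Ct (n - N + i) c' by exists 0; move=> j; rewrite mulr0 mod0p coef0 ffunE.
have hne : c != c'.
  apply/eqP => /ffunP /(_ (Ordinal htn)); rewrite !ffunE /=.
  have : A \is monic by apply: monic_exp; rewrite -polyC1 monicXsubC.
  move/monicP; rewrite lead_coefE hsA /= => -> /eqP; by rewrite oner_eq0.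
exists c, c'; split => //.
have hD : forall j : 'I_n, c j - c' j = A`_j by move=> j; rewrite !ffunE subr0.
apply/eqP; rewrite eqn_leq lower // andbT (@bdist_cnt F n b c c' A hD).
suff : (cnt (W (fun x => (A`_(x %% n)%N != 0)%R) b) 0 (q * N) <= q * (b + i))%N.
  by rewrite -hnq.
apply: upper => // x /coefA.
by rewrite (modn_dvdm _ (_ : (N %| n)%N)) // hnq dvdn_mull.
Qed.
End Main.

Theorem theorem2p10 (p m e k b i : nat) (F : finFieldType) :
  prime p -> (0 < m)%N -> #|F| = (p ^ m)%N ->
  (2 <= e)%N -> (1 <= k)%N -> (k <= e - 1)%N -> (2 <= b)%N ->
  (i <= p ^ (e - k - 1))%N -> (b + i <= p ^ (e - k))%N -> (i <= b)%N ->
  min_bdist_is b (@in_Ct F (p ^ e) (p ^ e - p ^ (e - k) + i))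
    (p ^ k * (b + i))%N.
Proof.
move=> pr m0 hcard he hk hke hb _ hbi hib.
have chF := card_finPcharP hcard pr.
have hnq : (p ^ e = p ^ k * p ^ (e - k))%N by rewrite -expnD subnKC //; lia.
have hN0 : (0 < p ^ (e - k))%N by rewrite expn_gt0 prime_gt0.
have hq0 : (0 < p ^ k)%N by rewrite expn_gt0 prime_gt0.
have hM := esym (frobX pr chF e).
have hN := esym (frobX pr chF (e - k)).
apply: main_gen => //; lia.
Qed.
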